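(* If $G$ is a (finite, simple, connected) block graph, then $\mathrm{mob}(G)=\omega(G)$.
   Context: A block graph is a connected graph in which every block (maximal 2-connected subgraph or bridge) is a complete graph. $\omega(G)$ is the clique number. A set $S$ of vertices is a general position set if no three distinct vertices of $S$ lie on a common shortest path. Place one robot on each vertex of a general position set $S$; robots move one at a time, and a move is legal if a robot moves to an adjacent unoccupied vertex and the new set of occupied vertices is again a general position set. $S$ is a mobile general position set if some finite sequence of legal moves results in every vertex of $G$ being occupied by some robot at some moment. $\mathrm{mob}(G)$ is the maximum cardinality of a mobile general position set of $G$. *)

(* Defs.v *)
From mathcomp Require Import all_boot.
From mathcomp Require Import boolp.
Set Implicit Arguments. Unset Strict Implicit. Unset Printing Implicit Defensive.

Section Graphs.
Variable T : finType.
Variable e : rel T.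

Definition simple_graph : Prop := symmetric e /\ irreflexive e.

Definition connected_graph : Prop := forall x y : T, connect e x y.

Definition induced (B : {set T}) : rel T :=
  [rel x y | [&& e x y, x \in B & y \in B]].

Definition induced_connected (B : {set T}) : bool :=
  [forall x in B, forall y in B, connect (induced B) x y].

Definition biconn_or_bridge (B : {set T}) : bool :=
  [&& 1 < #|B|, induced_connected B &
      [forall v in B, induced_connected (B :\ v)]].

(* blocks: maximal such vertex sets (blocks are induced subgraphs) *)
Definition is_block (B : {set T}) : bool := maxset biconn_or_bridge B.

Definition is_clique (K : {set T}) : bool :=
  [forall x in K, forall y in K, (x != y) ==> e x y].

Definition block_graph : Prop :=
  simple_graph /\ connected_graph /\
  forall B : {set T}, is_block B -> is_clique B.

Definition clique_number : nat := \max_(K : {set T} | is_clique K) #|K|.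

(* p (after the start vertex u) is a shortest u,v-path *)
Definition shortest_path (u v : T) (p : seq T) : Prop :=
  [/\ path e u p, last u p = v &
      forall q : seq T, path e u q -> last u q = v -> size p <= size q].

Definition on_common_shortest_path (x y z : T) : Prop :=
  exists u v p, shortest_path u v p /\ x \in u :: p /\ y \in u :: p /\ z \in u :: p.

Definition gp_set (S : {set T}) : Prop :=
  forall x y z, x \in S -> y \in S -> z \in S ->
    x != y -> y != z -> x != z -> ~ on_common_shortest_path x y z.

Definition legal_move (S S' : {set T}) : Prop :=
  exists u v, [/\ u \in S, v \notin S, e u v,
                 S' = v |: (S :\ u) & gp_set S'].

Fixpoint legal_seq (S : {set T}) (l : seq {set T}) : Prop :=
  match l with
  | [::] => True
  | S' :: l' => legal_move S S' /\ legal_seq S' l'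
  end.

Definition mobile_gp_set (S : {set T}) : Prop :=
  gp_set S /\
  exists l : seq {set T}, legal_seq S l /\
    forall x : T, exists2 C, C \in S :: l & x \in C.

Definition mobile_gp_setb (S : {set T}) : bool := `[< mobile_gp_set S >].

Definition mob : nat := \max_(S : {set T} | mobile_gp_setb S) #|S|.

End Graphs.

(* Main.v *)
Require Import Defs.
From mathcomp Require Import all_boot zify.
From mathcomp Require boolp.
Set Implicit Arguments. Unset Strict Implicit. Unset Printing Implicit Defensive.

Section Main.
Variables (T : finType) (e : rel T).
Hypothesis esym : symmetric e.
Hypothesis eirr : irreflexive e.
Hypothesis econn : connected_graph e.
Hypothesis hblock : forall B : {set T}, is_block e B -> is_clique e B.

Ltac glia := clear -esym; lia.

Definition reachb n x y := [exists p : n.-tuple T, path e x p && (last x p == y)].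

Lemma reachP n x y :
  reflect (exists p, [/\ path e x p, last x p = y & size p = n]) (reachb n x y).
Proof.
apply: (iffP existsP) => [[p /andP[Hp /eqP Hl]]|[p [Hp Hl Hs]]].
  by exists p; rewrite size_tuple.
have Hs' : size p == n by rewrite Hs.
by exists (Tuple Hs'); rewrite /= Hp Hl eqxx.
Qed.

Lemma ex_reach x y : exists n, reachb n x y.
Proof.
have /connectP[p Hp Hl] := econn x y.
by exists (size p); apply/reachP; exists p.
Qed.

Definition dist x y := ex_minn (ex_reach x y).

Lemma dist_path x y : exists p, [/\ path e x p, last x p = y & size p = dist x y].
Proof. rewrite /dist; case: ex_minnP => n /reachP H _; exact: H. Qed.

Lemma dist_min x p : path e x p -> dist x (last x p) <= size p.
Proof.
move=> Hp; rewrite /dist; case: ex_minnP => n _ Hm; apply: Hm.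
by apply/reachP; exists p.
Qed.

Lemma dist_min' x y p : path e x p -> last x p = y -> dist x y <= size p.
Proof. by move=> Hp <-; apply: dist_min. Qed.

Lemma dist0 x : dist x x = 0.
Proof. have := @dist_min' x x [::] isT erefl; rewrite /= leqn0 => /eqP; done. Qed.

Lemma dist0_eq x y : dist x y = 0 -> x = y.
Proof. by move=> H; case: (dist_path x y) => [[|z p] [Hp Hl Hs]]; rewrite H in Hs. Qed.

Lemma dist_sym x y : dist x y = dist y x.
Proof.
suff H : forall x y, dist x y <= dist y x by apply/eqP; rewrite eqn_leq !H.
move=> {}x {}y; case: (dist_path y x) => p [Hp Hl Hs].
rewrite -Hs -Hl.
have : path e (last y p) (rev (belast y p)).
  rewrite rev_path; move: Hp; apply: sub_path => a b; by rewrite esym.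
move/dist_min; rewrite size_rev size_belast.
suff -> : last (last y p) (rev (belast y p)) = y by [].
case: p {Hp Hl Hs} => [|z p] //=.
by rewrite rev_cons last_rcons.
Qed.

Lemma dist_tri x y z : dist x z <= dist x y + dist y z.
Proof.
case: (dist_path x y) => p [Hp Hl Hs]; case: (dist_path y z) => q [Hq Hl' Hs'].
have : path e x (p ++ q) by rewrite cat_path Hp Hl Hq.
move/dist_min; rewrite last_cat Hl Hl' size_cat Hs Hs'; done.
Qed.

Lemma dist_edge x y : e x y -> dist x y = 1.
Proof.
move=> Hxy; apply/eqP; rewrite eqn_leq.
have -> : dist x y <= 1 by apply: (dist_min' (p := [:: y])) => //=; rewrite Hxy.
rewrite lt0n; apply/eqP => /dist0_eq Exy; move: Hxy; rewrite Exy eirr.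
done.
Qed.

Lemma dist1_edge x y : dist x y = 1 -> e x y.
Proof.
move=> H; case: (dist_path x y) => [[|z [|z' p]] [Hp Hl Hs]]; rewrite H in Hs => //.
by move: Hp Hl => /= /andP[H1 _] <-.
Qed.

Lemma dist_lip x y z : e y z -> dist x z <= (dist x y).+1.
Proof. move=> H; have := dist_tri x y z; rewrite (dist_edge H); lia. Qed.

Lemma dist_lip2 x y z : e y z -> dist x y <= (dist x z).+1.
Proof. move=> H; apply: dist_lip; by rewrite esym. Qed.

Lemma step x w : x != w -> exists y, e x y /\ dist x w = (dist y w).+1.
Proof.
move=> Hxw; case: (dist_path x w) => [[|y p] [Hp Hl Hs]].
  by move: Hxw; rewrite -Hl eqxx.
move: Hp => /= /andP[Hxy Hp]; exists y; split => //.
have H1 : dist y w <= size p by rewrite -Hl; exact: dist_min.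
have := dist_tri x y w; rewrite (dist_edge Hxy) => H2.
move: Hs => /= Hs; lia.
Qed.

Definition geo x p := path e x p && (size p == dist x (last x p)).

Lemma geoI x p : path e x p -> size p = dist x (last x p) -> geo x p.
Proof. by move=> H1 H2; rewrite /geo H1 H2 eqxx. Qed.

Lemma geo_path x p : geo x p -> path e x p.
Proof. by case/andP. Qed.

Lemma geo_size x p : geo x p -> size p = dist x (last x p).
Proof. by case/andP => _ /eqP. Qed.

Lemma geo_exists x y : exists p, geo x p /\ last x p = y.
Proof. case: (dist_path x y) => p [H1 H2 H3]; exists p; split => //; apply: geoI => //; by rewrite H2. Qed.

Lemma geo_split x p1 p2 : geo x (p1 ++ p2) -> geo x p1 /\ geo (last x p1) p2.
Proof.
move=> /andP[Hp /eqP Hs]; move: Hp; rewrite cat_path => /andP[H1 H2].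
have D1 := dist_min H1; have D2 := dist_min H2.
rewrite last_cat size_cat in Hs.
have := dist_tri x (last x p1) (last (last x p1) p2) => D3.
split; apply: geoI => //; lia.
Qed.

Lemma geo_between x p u : geo x p -> u \in x :: p ->
  dist x u + dist u (last x p) = dist x (last x p).
Proof.
move=> Hg Hu; case/splitPl: Hu Hg => p1 p2 Hl Hg.
have [G1 G2] := geo_split Hg.
have S1 := geo_size G1; have S2 := geo_size G2; have S := geo_size Hg.
rewrite Hl in S1 S2; rewrite last_cat Hl size_cat in S *.
lia.
Qed.

Lemma geo_seg x p u v : geo x p -> u \in x :: p -> v \in x :: p ->
  dist x u + dist u v = dist x v \/ dist x v + dist v u = dist x u.
Proof.
move=> Hg Hu Hv; have Bu := geo_between Hg Hu; have Bv := geo_between Hg Hv.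
case/splitPl: Hu Hg Hv Bu Bv => p1 p2 Hl Hg Hv Bu Bv.
have [G1 G2] := geo_split Hg; rewrite Hl in G2.
move: Hv; rewrite -cat_cons mem_cat => /orP[Hv|Hv].
  right; have := geo_between G1 Hv; by rewrite Hl.
left; have Hv' : v \in u :: p2 by rewrite inE Hv orbT.
have := geo_between G2 Hv'; move: Bu Bv; rewrite last_cat Hl.
lia.
Qed.

Definition betw x y z := dist x y + dist y z == dist x z.

Lemma shortest_geo u v p : shortest_path e u v p -> geo u p /\ last u p = v.
Proof.
case=> Hp Hl Hm; split => //; apply: geoI => //.
case: (dist_path u v) => q [Hq Hlq Hsq].
have := Hm q Hq Hlq; have := dist_min Hp; rewrite Hl; lia.
Qed.

Lemma geo_shortest u p : geo u p -> shortest_path e u (last u p) p.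
Proof.
move=> G; split => //; first exact: geo_path.
by move=> q Hq Hl; rewrite (geo_size G) -Hl; apply: dist_min.
Qed.

Lemma oncommon_betw x y z : on_common_shortest_path e x y z ->
  [|| betw x y z, betw y x z | betw x z y].
Proof.
case=> u [v [p [Hsp [Hx [Hy Hz]]]]]; have [G _] := shortest_geo Hsp.
have := geo_seg G Hx Hy; have := geo_seg G Hx Hz; have := geo_seg G Hy Hz.
move=> H1 H2 H3.
have S1 := dist_sym x y; have S2 := dist_sym x z; have S3 := dist_sym y z.
have : dist x y + dist y z = dist x z \/ dist y x + dist x z = dist y z \/
       dist x z + dist z y = dist x y by lia.
by rewrite /betw; case=> [->|[->|->]]; rewrite eqxx ?orbT.
Qed.

Lemma gpP (S : {set T}) : (forall x y z, x \in S -> y \in S -> z \in S ->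
   x != y -> y != z -> x != z -> ~~ betw x y z) -> gp_set e S.
Proof.
move=> H x y z Hx Hy Hz Hxy Hyz Hxz Hc.
case/or3P: (oncommon_betw Hc) => Hb.
- by move: (H x y z Hx Hy Hz Hxy Hyz Hxz); rewrite Hb.
- by have := H y x z Hy Hx Hz; rewrite eq_sym Hxy Hxz Hyz Hb => /(_ isT isT isT).
- by have := H x z y Hx Hz Hy; rewrite Hxz (eq_sym z y) Hyz Hxy Hb => /(_ isT isT isT).
Qed.

Lemma path_induced (A : {set T}) x p : x \in A -> all (mem A) p -> path e x p ->
  path (induced e A) x p.
Proof.
elim: p x => [|y p IH] x //= Hx /andP[Hy Hall] /andP[Hxy Hp].
by rewrite /induced /= Hxy Hx Hy /=; apply: IH.
Qed.

Lemma sep_hit m x p : x != m -> path e x p ->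
  ~~ connect (induced e [set~ m]) x (last x p) -> m \in p.
Proof.
move=> Hx Hp Hc; apply/negPn/negP => Hm; move: Hc => /negP; apply.
apply/connectP; exists p => //; apply: path_induced => //.
  by rewrite in_setC1.
apply/allP => z Hz; rewrite /= in_setC1; apply/eqP => E.
by move: Hz; rewrite E (negbTE Hm).
Qed.

Lemma sep_oncommon m x y : x != m -> y != m ->
  ~~ connect (induced e [set~ m]) x y -> on_common_shortest_path e x m y.
Proof.
move=> Hx Hy Hc; case: (geo_exists x y) => p [G Hl].
have Hm : m \in p by apply: (sep_hit Hx (geo_path G)); rewrite Hl.
exists x, y, p; split; first by rewrite -Hl; apply: geo_shortest.
split; first exact: mem_head.
split; first by rewrite inE Hm orbT.
by rewrite -Hl mem_last.
Qed.

Lemma induced_sym (A : {set T}) : symmetric (induced e A).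
Proof.
move=> x y; rewrite /induced /= [e x y]esym.
by case: (x \in A); case: (y \in A); rewrite ?andbT ?andbF.
Qed.


Lemma clique_adj (K : {set T}) x y : is_clique e K -> x \in K -> y \in K -> x != y -> e x y.
Proof.
move=> /forallP H Hx Hy Hxy; have := H x; rewrite Hx /= => /forallP/(_ y).
by rewrite Hy Hxy.
Qed.

Lemma cliqueP (K : {set T}) : (forall x y, x \in K -> y \in K -> x != y -> e x y) -> is_clique e K.
Proof.
move=> H; apply/forallP => x; apply/implyP => Hx; apply/forallP => y.
apply/implyP => Hy; apply/implyP; exact: H.
Qed.

Lemma clique_sub (A B : {set T}) : A \subset B -> is_clique e B -> is_clique e A.
Proof.
move=> Hs HB; apply: cliqueP => x y Hx Hy; apply: (clique_adj HB); exact: (subsetP Hs).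
Qed.

Lemma biconn_clique (B : {set T}) : biconn_or_bridge e B -> is_clique e B.
Proof.
move=> HB; case: (maxset_exists HB) => A HA Hs.
exact: (clique_sub Hs (hblock HA)).
Qed.

Lemma path_conn (A : {set T}) x p : path (induced e A) x p ->
  forall y, y \in x :: p -> connect (induced e A) x y.
Proof.
elim: p x => [|z p IH] x /= Hp y.
  by rewrite inE => /eqP ->; apply: connect0.
rewrite inE => /orP[/eqP ->|Hy]; first exact: connect0.
move: Hp => /andP[Hxz Hp]; apply: connect_trans (connect1 Hxz) _.
exact: IH.
Qed.

Lemma path_conn2 (A : {set T}) x p : path (induced e A) x p ->
  forall y z, y \in x :: p -> z \in x :: p -> connect (induced e A) y z.
Proof.
move=> Hp y z Hy Hz; apply: connect_trans (path_conn Hp Hz).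
rewrite (sym_connect_sym (induced_sym A)); exact: (path_conn Hp Hy).
Qed.

Lemma cycle_clique c : uniq c -> 2 < size c -> cycle e c -> is_clique e [set x in c].
Proof.
move=> Hu Hs Hc; apply: biconn_clique; apply/and3P; split.
- by rewrite cardsE (card_uniqP Hu); apply: leq_trans Hs.
- case: c Hu Hs Hc => [|x0 p] // Hu Hs Hc.
  have Hp : path e x0 p by move: Hc; rewrite /= rcons_path => /andP[].
  have Hp' : path (induced e [set x in x0 :: p]) x0 p.
    apply: path_induced => //; first by rewrite inE mem_head.
    by apply/allP => z Hz; rewrite /= inE inE Hz orbT.
  apply/forallP => x; apply/implyP => Hx; apply/forallP => y; apply/implyP => Hy.
  by apply: (path_conn2 Hp'); rewrite -[_ \in _ :: _]in_set.
- apply/forallP => v; apply/implyP; rewrite inE => Hv.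
  case: (rot_to Hv) => i c' Hrot.
  have Hc' : cycle e (v :: c') by rewrite -Hrot rot_cycle.
  have Hu' : uniq (v :: c') by rewrite -Hrot rot_uniq.
  have Hs' : 2 < size (v :: c') by rewrite -Hrot size_rot.
  have Hmem : forall u, (u \in [set x in c] :\ v) = (u \in c') .
    move=> u; rewrite !inE -(mem_rot i) Hrot inE.
    case: (eqVneq u v) => [->|] //=; by move: Hu' => /= /andP[/negbTE ->].
  case: c' Hrot Hc' Hu' Hs' Hmem => [|y c''] // Hrot Hc' Hu' Hs' Hmem.
  have Hp : path e y c'' by move: Hc' => /= /andP[_]; rewrite rcons_path => /andP[].
  have Hp' : path (induced e ([set x in c] :\ v)) y c''.
    apply: path_induced => //; first by rewrite Hmem mem_head.
    by apply/allP => z Hz; rewrite /= Hmem inE Hz orbT.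
  apply/forallP => x; apply/implyP => Hx; apply/forallP => z; apply/implyP => Hz.
  by apply: (path_conn2 Hp'); rewrite -Hmem.
Qed.

Lemma cycle_adj c x y : uniq c -> 2 < size c -> cycle e c -> x \in c -> y \in c ->
  x != y -> e x y.
Proof.
move=> Hu Hs Hc Hx Hy; apply: (clique_adj (cycle_clique Hu Hs Hc)); by rewrite inE.
Qed.

Lemma cyc4 a b c d : e a b -> e b c -> e c d -> e d a -> a != c -> b != d -> e a c.
Proof.
move=> Hab Hbc Hcd Hda Hac Hbd.
have Hne : forall x y, e x y -> x != y by move=> x y H; apply/eqP => E; move: H; rewrite E eirr.
apply: (@cycle_adj [:: a; b; c; d]) => //; last by rewrite !inE eqxx ?orbT.
- rewrite /= !inE !negb_or Hne // Hac (Hne a d) ?[e a d]esym // Hne // Hbd Hne //.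
- by rewrite /= Hab Hbc Hcd Hda.
- by rewrite !inE eqxx.
Qed.



Lemma edge_neq x y : e x y -> x != y.
Proof. by move=> H; apply/eqP => E; move: H; rewrite E eirr. Qed.

Lemma edge_sym x y : e x y -> e y x.
Proof. by rewrite esym. Qed.

Lemma dist0' x : dist x x = 0.
Proof. exact: dist0. Qed.

Lemma dist_neq x y : x != y -> 0 < dist x y.
Proof. by move=> H; rewrite lt0n; apply/eqP => /dist0_eq E; rewrite E eqxx in H. Qed.

Lemma lipA x y z : e y z -> dist x z <= (dist x y).+1.
Proof. exact: dist_lip. Qed.

Lemma lipB x y z : e y z -> dist x y <= (dist x z).+1.
Proof. by move=> H; apply: dist_lip; rewrite esym. Qed.

Lemma lipC y z x : e y z -> dist z x <= (dist y x).+1.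
Proof. by move=> H; rewrite !(dist_sym _ x); apply: lipA. Qed.

Lemma lipD y z x : e y z -> dist y x <= (dist z x).+1.
Proof. by move=> H; rewrite !(dist_sym _ x); apply: lipB. Qed.

Lemma merge_gen w n : forall y r, uniq (y :: r) -> path e y r ->
  dist y w = n -> dist (last y r) w = n -> y != last y r ->
  (forall u, u \in y :: r -> n <= dist u w) ->
  exists s, dist s w < n /\ forall u, u \in y :: r -> e s u.
Proof.
elim: n => [|n IH] y r Hu Hp Hy Hx Hne Hall.
  by move: Hne; rewrite (dist0_eq Hx) (dist0_eq Hy) eqxx.
set x := last y r in Hx Hne.
have Hxw : x != w by apply/eqP => E; move: Hx; rewrite E dist0.
have Hyw : y != w by apply/eqP => E; move: Hy; rewrite E dist0.
case: (step Hxw) => x' [Hxx' Dx']; rewrite Hx in Dx'; case: Dx' => Dx'.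
case: (step Hyw) => y' [Hyy' Dy']; rewrite Hy in Dy'; case: Dy' => Dy'.
have Hx'n : x' \notin y :: r by apply/negP => /Hall; rewrite -Dx' ltnn.
have Hy'n : y' \notin y :: r by apply/negP => /Hall; rewrite -Dy' ltnn.
have Hr : r != [::] by apply/eqP => Er; move: Hne; rewrite /x Er eqxx.
case: (eqVneq x' y') => [E|Hxy'].
  exists x'; split; first by rewrite -Dx'.
  move=> u Hu'; apply: (@cycle_adj (x' :: y :: r)).
  - by rewrite cons_uniq Hx'n Hu.
  - by rewrite /= !ltnS lt0n size_eq0.
  - have H1 : e x' y by rewrite E esym.
    by rewrite /= rcons_path Hp -/x H1 Hxx'.
  - exact: mem_head.
  - by rewrite inE Hu' orbT.
  - by apply/eqP => E'; move: Hx'n; rewrite E' Hu'.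
have := IH y' (rcons (y :: r) x').
case.
- by rewrite cons_uniq rcons_uniq mem_rcons inE negb_or (eq_sym y' x') Hxy' Hx'n Hy'n Hu.
- by rewrite /= rcons_path Hp -/x Hxx' esym Hyy'.
- by rewrite Dy'.
- by rewrite last_rcons Dx'.
- by rewrite last_rcons eq_sym.
- move=> u; rewrite inE mem_rcons inE => /or3P[/eqP->|/eqP->|/Hall]; [by rewrite -Dy'|by rewrite -Dx'|exact: ltnW].
- move=> s [Hs Hadj]; exists s; split; first by rewrite ltnS ltnW.
  move=> u Hu'; apply: Hadj; by rewrite inE mem_rcons inE Hu' !orbT.
Qed.

Lemma U1 w x y : e x y -> dist x w = dist y w ->
  exists s, [/\ e s x, e s y & (dist s w).+1 = dist x w].
Proof.
move=> Hxy Hd.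
have H1 : uniq [:: y; x] by rewrite /= inE andbT eq_sym edge_neq.
have H2 : path e y [:: x] by rewrite /= esym Hxy.
have H5 : y != last y [:: x] by rewrite /= eq_sym edge_neq.
have H6 : forall u, u \in [:: y; x] -> dist x w <= dist u w.
  by move=> u; rewrite !inE => /orP[/eqP->|/eqP->]; rewrite ?Hd.
case: (@merge_gen w (dist x w) y [:: x] H1 H2 (sym_eq Hd) erefl H5 H6) => s [Hs Hadj].
have Hsx : e s x by apply: Hadj; rewrite !inE eqxx orbT.
exists s; split => //.
- by apply: Hadj; rewrite !inE eqxx.
- have := lipC w Hsx; move: Hs; glia.
Qed.

Lemma cross_gen a c n : e a c -> forall y r, uniq (y :: r) -> path e y r ->
  dist (last y r) a = n -> dist (last y r) c = n.+1 ->
  dist y c = n -> dist y a = n.+1 ->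
  (forall u, u \in y :: r -> n <= dist u a /\ n <= dist u c) ->
  forall u, u \in y :: r -> u != c -> e u c.
Proof.
move=> Hac; elim: n => [|n IH] y r Hu Hp Hxa Hxc Hyc Hya Hall.
  have Ex := dist0_eq Hxa; have Ey := dist0_eq Hyc.
  move=> u Hu' Huc.
  case: r Hu Hp Hxa Hxc Hall Ex Hu' => [|z r] Hu Hp Hxa Hxc Hall Ex Hu'.
    by move: Hxc; rewrite /= Ey dist0.
  case: r Hu Hp Hxa Hxc Hall Ex Hu' => [|z' r] Hu Hp Hxa Hxc Hall Ex Hu'.
    move: Hu'; rewrite !inE Ey (negbTE Huc) /= => /eqP ->.
    by move: Ex => /= ->.
  apply: (@cycle_adj (y :: z :: z' :: r)) => //.
  - rewrite /= rcons_path.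
    move: Hp => /= /andP[-> /andP[-> ->]] /=.
    by move: Ex => /= ->; rewrite Ey.
  - by rewrite Ey mem_head.
set x := last y r in Hxa Hxc.
have Hxa' : x != a by apply/eqP => E; move: Hxa; rewrite E dist0.
have Hyc' : y != c by apply/eqP => E; move: Hyc; rewrite E dist0.
case: (step Hxa') => x' [Hxx' Dx']; rewrite Hxa in Dx'; case: Dx' => Dx'.
case: (step Hyc') => y' [Hyy' Dy']; rewrite Hyc in Dy'; case: Dy' => Dy'.
have Dx'c : dist x' c = n.+1.
  have := lipA x' Hac; have := lipD c Hxx'; rewrite Hxc; move: Dx'; glia.
have Dy'a : dist y' a = n.+1.
  have := lipA y' (edge_sym Hac); have := lipD a Hyy'; rewrite Hya; move: Dy'; glia.
have Hx'n : x' \notin y :: r by apply/negP => /Hall [+ _]; rewrite -Dx' ltnn.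
have Hy'n : y' \notin y :: r by apply/negP => /Hall [_]; rewrite -Dy' ltnn.
have Hxy' : x' != y' by apply/eqP => E; move: Dx'; rewrite E Dy'a; glia.
move=> u Hu' Huc.
apply: (IH y' (rcons (y :: r) x')) => //.
- by rewrite cons_uniq rcons_uniq mem_rcons inE negb_or (eq_sym y' x') Hxy' Hx'n Hy'n Hu.
- by rewrite /= rcons_path Hp -/x Hxx' esym Hyy'.
- by rewrite last_rcons.
- by rewrite last_rcons.
- move=> v; rewrite inE mem_rcons inE => /or3P[/eqP->|/eqP->|/Hall]; move: Dx' Dx'c Dy' Dy'a; glia.
- by rewrite inE mem_rcons inE Hu' !orbT.
Qed.

Lemma Vlem a c v w m : e a c -> e v w -> dist v a = m -> dist w c = m ->
  dist v c = m.+1 -> dist w a = m.+1 -> 0 < m -> False.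
Proof.
move=> Hac Hvw Hva Hwc Hvc Hwa Hm.
have Hvc' : v != c by apply/eqP => E; move: Hvc; rewrite E dist0.
have H1 : uniq [:: w; v] by rewrite /= inE andbT eq_sym edge_neq.
have H2 : path e w [:: v] by rewrite /= esym Hvw.
have H6 : forall u, u \in [:: w; v] -> m <= dist u a /\ m <= dist u c.
  by move=> u; rewrite !inE => /orP[/eqP->|/eqP->]; move: Hva Hwc Hvc Hwa; glia.
have Hv : v \in [:: w; v] by rewrite !inE eqxx orbT.
have := @cross_gen a c m Hac w [:: v] H1 H2 Hva Hvc Hwc Hwa H6 v Hv Hvc'.
move/(dist_edge); rewrite Hvc; move: Hm; glia.
Qed.

Lemma Wlem a b s v m : e a b -> e a s -> e b s -> dist v a = m -> dist v s = m ->
  dist v b = m.+1 -> 0 < m -> False.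
Proof.
move=> Hab Has Hbs Hva Hvs Hvb Hm.
case: (@U1 v a s Has) => [|t [Hta Hts Dt]].
  by rewrite !(dist_sym _ v) Hva Hvs.
have Htb : t != b.
  by apply/eqP => E; move: Dt; rewrite E (dist_sym b) (dist_sym a) Hvb Hva; move: Hm; glia.
have Htb' : e t b.
  apply: (@cyc4 t a b s) => //; first by rewrite esym.
  by rewrite edge_neq.
have := lipA v Htb'; rewrite (dist_sym v t) Hvb.
move: Dt; rewrite (dist_sym a) Hva; move: Hm; glia.
Qed.

Definition side a b u := dist u b == (dist u a).+1.

Lemma side_closed a b v w : e a b -> side a b v -> v != a -> e v w -> w != a ->
  side a b w.
Proof.
move=> Hab /eqP Hvb Hva Hvw Hwa.
set m := dist v a in Hvb.
have Hm : 0 < m by apply: dist_neq.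
have H1 := lipD a Hvw; have H2 := lipC a Hvw; have H3 := lipD b Hvw; have H4 := lipC b Hvw.
have H5 := lipA w Hab; have H6 := lipB w Hab.
rewrite -/m Hvb in H1 H2 H3 H4 *.
apply/negPn/negP; rewrite /side => /eqP Hns.
have : [\/ dist w a = m.+1 /\ dist w b = m, dist w a = m /\ dist w b = m |
        dist w a = m.+1 /\ dist w b = m.+1].
  have : dist w a = m.+1 /\ dist w b = m \/ dist w a = m /\ dist w b = m \/
         dist w a = m.+1 /\ dist w b = m.+1 by move: H1 H2 H3 H4 H5 H6 Hns Hm; glia.
  by case=> [?|[?|?]]; [apply: Or31|apply: Or32|apply: Or33].
case=> [[Ea Eb]|[Ea Eb]|[Ea Eb]].
- exact: (Vlem Hab Hvw (erefl m) Eb Hvb Ea Hm).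
- case: (@U1 w a b Hab) => [|s [Hsa Hsb Ds]].
    by rewrite !(dist_sym _ w) Ea Eb.
  have Hvs : dist v s = m.
    have := lipA v Hsb; have := dist_tri v w s.
    rewrite (dist_edge Hvw) (dist_sym w s).
    move: Ds; rewrite (dist_sym a w) Ea Hvb; move: Hm; glia.
  by apply: (Wlem Hab (edge_sym Hsa) (edge_sym Hsb) (erefl m) Hvs Hvb Hm).
- case: (@U1 w a b Hab) => [|s [Hsa Hsb Ds]].
    by rewrite !(dist_sym _ w) Ea Eb.
  have Ds' : dist w s = m by move: Ds; rewrite (dist_sym a w) (dist_sym s w) Ea; case.
  have Hvs1 := lipA v Hsb; have Hvs2 := lipA v (edge_sym Hsa).
  rewrite Hvb in Hvs1; rewrite -/m in Hvs2.
  have [Hvs|Hvs] : dist v s = m \/ dist v s = m.+1 by move: Hvs1 Hvs2; glia.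
  + by apply: (Wlem Hab (edge_sym Hsa) (edge_sym Hsb) (erefl m) Hvs Hvb Hm).
  + exact: (Vlem (edge_sym Hsa) Hvw (erefl m) Ds' Hvs Ea Hm).
Qed.

Lemma side_sep a b v u : e a b -> side a b v -> v != a -> ~~ side a b u ->
  ~~ connect (induced e [set~ a]) v u.
Proof.
move=> Hab Hv Hva Hu; apply/negP => /connectP[p Hp E]; move: Hu; rewrite E.
elim: p v Hv Hva Hp {E} => [|z p IH] v Hv Hva //=; first by rewrite Hv.
rewrite {1}/induced /= !in_setC1 => /andP[/and3P[Hvz _ Hza] Hp].
apply: IH Hp => //; exact: (side_closed Hab Hv Hva Hvz Hza).
Qed.


Definition maxclique (K : {set T}) := maxset (is_clique e) K.

Lemma GL (K : {set T}) z g b : maxclique K -> g \in K ->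
  (forall c, c \in K -> dist z g <= dist z c) -> b \in K -> b != g ->
  dist z b = (dist z g).+1.
Proof.
move=> /maxsetP[HK Hmax] Hg Hmin Hb Hbg.
have Hgb : e g b by apply: (clique_adj HK) => //; rewrite eq_sym.
have L1 := Hmin b Hb; have L2 := lipA z Hgb.
case: (ltngtP (dist z b) (dist z g)) => [H|H|Heq]; [move: L1 H; glia|move: L2 H; glia|exfalso].
case: (@U1 z g b Hgb) => [|s [Hsg Hsb Ds]]; first by rewrite !(dist_sym _ z).
have Hsn : s \notin K.
  apply/negP => Hs; have := Hmin s Hs; rewrite (dist_sym z s) (dist_sym z g) -Ds.
  by rewrite ltnn.
have Hadj : forall c, c \in K -> e s c.
  move=> c Hc; case: (eqVneq c g) => [->|Hcg] //; case: (eqVneq c b) => [->|Hcb] //.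
  apply: (@cyc4 s g c b) => //.
  - by apply: (clique_adj HK) => //; rewrite eq_sym.
  - exact: (clique_adj HK).
  - by rewrite esym.
  - by apply/eqP => E; move: Hsn; rewrite E Hc.
  - by rewrite eq_sym.
have Hcl : is_clique e (s |: K).
  apply: cliqueP => x y; rewrite !inE => /orP[/eqP->|Hx] /orP[/eqP->|Hy] Hxy.
  - by rewrite eqxx in Hxy.
  - exact: Hadj.
  - by rewrite esym; apply: Hadj.
  - exact: (clique_adj HK).
have := Hmax _ Hcl (subsetUr _ _) => E.
by move: Hsn; rewrite -E !inE eqxx.
Qed.

Section Lower.
Variables (K : {set T}) (a : T).
Hypothesis HK : is_clique e K.
Hypothesis Ha : a \in K.

Definition good u := [forall b in K :\ a, dist u b == (dist u a).+1].
Definition conf u := u |: (K :\ a).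

Lemma goodP u : good u -> forall b, b \in K :\ a -> dist u b = (dist u a).+1.
Proof. by move=> /forallP H b Hb; have := H b; rewrite Hb => /eqP. Qed.

Lemma good_notin u : good u -> u \notin K :\ a.
Proof. by move=> G; apply/negP => Hu; have := goodP G Hu; rewrite dist0. Qed.

Lemma good_a : good a.
Proof.
apply/forallP => b; apply/implyP => Hb; move: (Hb); rewrite !inE => /andP[Hba HbK].
by rewrite dist0 dist_edge //; apply: (clique_adj HK) => //; rewrite eq_sym.
Qed.

Lemma conf_a : conf a = K.
Proof. by rewrite /conf setD1K. Qed.

Lemma good_gp u : good u -> gp_set e (conf u).
Proof.
move=> G; have Gn := good_notin G.
have dU : forall q, q \in K :\ a -> dist u q = (dist u a).+1 /\ dist q u = (dist u a).+1.
  by move=> q Hq; rewrite (dist_sym q u) (goodP G Hq).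
have dK : forall p q, p \in K :\ a -> q \in K :\ a -> p != q -> dist p q = 1.
  move=> p q; rewrite !inE => /andP[_ Hp] /andP[_ Hq] Hpq.
  by apply: dist_edge; apply: (clique_adj HK).
apply: gpP => x y z.
rewrite /conf /betw.
case/setU1P => [->|Hx]; case/setU1P => [->|Hy]; case/setU1P => [->|Hz];
  rewrite ?eqxx // => Hxy Hyz Hxz.
- have [H1 _] := dU y Hy; have [H2 _] := dU z Hz; rewrite H1 H2 (dK y z) //.
  by rewrite addn1 eqn_leq ltnn.
- have [_ H1] := dU x Hx; have [H2 _] := dU z Hz; rewrite H1 H2 (dK x z) //.
  apply/negP => /eqP; glia.
- have [_ H1] := dU x Hx; have [_ H2] := dU y Hy; rewrite H1 H2 (dK x y) //.
  by rewrite add1n eqn_leq ltnn.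
- by rewrite !dK //; apply/negP => /eqP.
Qed.

Lemma good_move u v : good u -> good v -> e u v -> legal_move e (conf u) (conf v).
Proof.
move=> Gu Gv Huv; exists u, v; split => //.
- exact: setU11.
- have Hvu : v != u by rewrite eq_sym edge_neq.
  rewrite /conf !inE negb_or Hvu /=.
  by have := good_notin Gv; rewrite !inE.
- by rewrite /conf setU1K // good_notin.
- exact: good_gp.
Qed.

Lemma walk v q : good v -> path e v q -> all good q ->
  legal_seq e (conf v) (map conf q) /\ last (conf v) (map conf q) = conf (last v q).
Proof.
elim: q v => [|w q IH] v Gv //= /andP[Hvw Hp] /andP[Gw Hall].
have [H1 H2] := IH w Gw Hp Hall; split => //; split => //.
exact: good_move.
Qed.

End Lower.

Lemma legal_seq_cat S l1 l2 : legal_seq e S (l1 ++ l2) <->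
  legal_seq e S l1 /\ legal_seq e (last S l1) l2.
Proof.
elim: l1 S => [|S1 l1 IH] S /=; first by split => [H|[_ H]].
split.
  by move=> [Hm /IH [H1 H2]].
by move=> [[Hm H1] H2]; split => //; apply/IH.
Qed.

Lemma good_geo K a w p : maxclique K -> a \in K ->
  (forall c, c \in K -> dist w a <= dist w c) -> geo a p -> last a p = w ->
  forall u, u \in a :: p -> good K a u.
Proof.
move=> HK Ha Hmin G Hl u Hu; apply/forallP => b; apply/implyP; rewrite !inE => /andP[Hba Hb].
have Gb := GL HK Ha Hmin Hb Hba.
have Bt := geo_between G Hu; rewrite Hl in Bt.
have Hab : e a b by apply: (clique_adj (maxsetp HK)) => //; rewrite eq_sym.
have L1 := lipA u Hab; have L2 := dist_tri w u b.
have S1 := dist_sym a u; have S2 := dist_sym u w; have S3 := dist_sym a w.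
apply/eqP; move: Gb Bt L1 L2 S1 S2 S3; glia.
Qed.

Lemma trip K w : maxclique K -> K != set0 ->
  exists l, [/\ legal_seq e K l, last K l = K & exists2 C, C \in K :: l & w \in C].
Proof.
move=> HK HK0; have HKc := maxsetp HK.
case: (boolP (w \in K)) => HwK.
  by exists [::]; split => //; exists K => //; rewrite mem_head.
case/set0Pn: HK0 => k0 Hk0.
case: (arg_minnP (fun c => dist w c) Hk0) => a Ha Hmin.
have {}Ha : a \in K := Ha.
case: (geo_exists a w) => p [G Hl].
have Gd := good_geo HK Ha Hmin G Hl.
have Hwa : w != a by apply/eqP => E; move: HwK; rewrite E Ha.
case: p G Hl Gd => [|y p] G Hl Gd; first by move: Hwa; rewrite -Hl eqxx.
have Hp := geo_path G.
have [L1 E1] := walk HKc (Gd a (mem_head _ _)) Hp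
  (introT allP (fun u Hu => Gd u (mem_behead Hu))).
rewrite conf_a // Hl in L1 E1.
set q := rev (belast a (y :: p)).
have Hq : path e w q.
  rewrite /q -Hl rev_path; move: Hp; apply: sub_path => x z; by rewrite esym.
have Hqa : last w q = a by rewrite /q /= rev_cons last_rcons.
have Gq : all (good K a) q.
  apply/allP => u; rewrite /q mem_rev => /mem_belast Hu; exact: Gd.
have Gw : good K a w by apply: Gd; rewrite -Hl mem_last.
have [L2 E2] := walk HKc Gw Hq Gq.
rewrite Hqa conf_a // in E2.
exists (map (conf K a) (y :: p) ++ map (conf K a) q); split.
- apply/legal_seq_cat; split => //; by rewrite E1.
- by rewrite last_cat E1 E2.
- exists (conf K a w); last exact: setU11.
  rewrite inE mem_cat; apply/orP; right; apply/orP; left; apply: map_f.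
  move: (mem_last y p); rewrite /= -Hl inE => /orP[/eqP E|] //.
Qed.

Lemma all_trips K : maxclique K -> K != set0 -> forall s : seq T,
  exists l, [/\ legal_seq e K l, last K l = K &
    forall w, w \in s -> exists2 C, C \in K :: l & w \in C].
Proof.
move=> HK HK0; elim=> [|w s [l [L1 E1 C1]]]; first by exists [::]; split.
case: (trip w HK HK0) => lw [L2 E2 [C HC HwC]].
exists (lw ++ l); split.
- by apply/legal_seq_cat; rewrite E2.
- by rewrite last_cat E2.
- move=> w'; rewrite inE => /orP[/eqP->|Hw'].
    exists C => //; move: HC; rewrite !inE mem_cat => /orP[->|->] //; by rewrite orbT.
  case: (C1 w' Hw') => C' HC' HwC'; exists C' => //.
  by move: HC'; rewrite !inE mem_cat => /orP[->|->] //; rewrite !orbT.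
Qed.

Lemma clique_gp K : is_clique e K -> gp_set e K.
Proof.
move=> HK; apply: gpP => x y z Hx Hy Hz Hxy Hyz Hxz.
rewrite /betw !dist_edge //; by apply: (clique_adj HK).
Qed.

Lemma clique_mobile K : maxclique K -> K != set0 -> mobile_gp_set e K.
Proof.
move=> HK HK0; split; first exact: clique_gp (maxsetp HK).
case: (all_trips HK HK0 (enum T)) => l [L _ C]; exists l; split => // x.
by apply: C; rewrite mem_enum.
Qed.

Definition blocked (C : {set T}) m := [forall r0 in C, [exists x in C, exists y in C,
  [&& x != r0, y != r0 & ~~ connect (induced e [set~ m]) x y]]].

Lemma blocked_step (C C' : {set T}) m : m \notin C -> blocked C m -> legal_move e C C' ->
  m \notin C' /\ blocked C' m.
Proof.
move=> HmC Hb [u [v [Hu Hv Huv EC' Hgp]]].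
have Hsep : forall r0, r0 \in C -> exists x y, [/\ x \in C, y \in C, x != r0, y != r0 &
    ~~ connect (induced e [set~ m]) x y].
  move=> r0 Hr0; move: Hb => /forall_inP/(_ r0 Hr0)/exists_inP[x Hx /exists_inP[y Hy]].
  by case/and3P => H1 H2 H3; exists x, y.
have Hum : u != m by apply/eqP => E; move: HmC; rewrite -E Hu.
have Hvm : v != m.
  apply/eqP => Evm; case: (Hsep u Hu) => x [y [Hx Hy Hxu Hyu Hn]].
  have Hxm : x != m by apply/eqP => E; move: HmC; rewrite -E Hx.
  have Hym : y != m by apply/eqP => E; move: HmC; rewrite -E Hy.
  have Hxy : x != y by apply/eqP => E; move: Hn; rewrite E connect0.
  apply: (Hgp x m y) => //.
  - by rewrite EC' !inE Hxu Hx orbT.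
  - by rewrite EC' -Evm setU11.
  - by rewrite EC' !inE Hyu Hy orbT.
  - by rewrite eq_sym.
  - exact: sep_oncommon.
split; first by rewrite EC' !inE negb_or eq_sym Hvm /= (negbTE HmC) andbF.
set f := fun z => if z == u then v else z.
have Hconn : forall z, connect (induced e [set~ m]) z (f z).
  move=> z; rewrite /f; case: (eqVneq z u) => [->|_]; last exact: connect0.
  by apply: connect1; rewrite /induced /= !in_setC1 Huv Hum Hvm.
have Hsym := sym_connect_sym (induced_sym [set~ m]).
apply/forall_inP => r0' Hr0'.
set r0 := if r0' == v then u else r0'.
have Hr0 : r0 \in C.
  rewrite /r0; case: (eqVneq r0' v) => // Hne.
  by move: Hr0'; rewrite EC' !inE (negbTE Hne) => /andP[].
case: (Hsep r0 Hr0) => x [y [Hx Hy Hxr Hyr Hn]].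
have Hf : forall z, z \in C -> z != r0 -> f z \in C' /\ f z != r0'.
  move=> z Hz Hzr; rewrite /f EC'; case: (eqVneq z u) => [Ezu|Nzu].
    split; first exact: setU11.
    apply/eqP => E; move: Hzr; rewrite /r0 -E eqxx Ezu eqxx; done.
  split; first by rewrite !inE Nzu Hz orbT.
  apply/eqP => E; move: Hzr; rewrite /r0 -E.
  case: (eqVneq z v) => [Ezv|_]; last by rewrite eqxx.
  by move: Hv; rewrite -Ezv Hz.
have [Hx1 Hx2] := Hf x Hx Hxr; have [Hy1 Hy2] := Hf y Hy Hyr.
apply/exists_inP; exists (f x) => //; apply/exists_inP; exists (f y) => //.
rewrite Hx2 Hy2 /=; apply/negP => Hc; move: Hn => /negP; apply.
apply: connect_trans (Hconn x) _; apply: connect_trans Hc _.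
by rewrite Hsym; apply: Hconn.
Qed.

Lemma blocked_seq m l : forall C : {set T}, m \notin C -> blocked C m -> legal_seq e C l ->
  forall C2 : {set T}, C2 \in C :: l -> m \notin C2.
Proof.
elim: l => [|C1 l IH] C HmC Hb /= Hl C2; first by rewrite inE => /eqP->.
case: Hl => Hm Hl; have [H1 H2] := blocked_step HmC Hb Hm.
rewrite inE => /orP[/eqP->|HC2] //; exact: (IH C1 H1 H2 Hl).
Qed.

Definition gate (K : {set T}) z :=
  if [pick b in K] is Some b0 then [arg min_(b < b0 in K) dist z b] else z.

Lemma gateP (K : {set T}) z b0 : b0 \in K ->
  gate K z \in K /\ (forall c, c \in K -> dist z (gate K z) <= dist z c).
Proof.
move=> Hb0; rewrite /gate; case: pickP => [b1 Hb1|H]; last by move: (H b0); rewrite Hb0.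
by case: (arg_minnP (fun b => dist z b) Hb1) => g Hg Hmin; split.
Qed.

Definition dK (K : {set T}) z := dist z (gate K z).

Lemma GLg (K : {set T}) z b : maxclique K -> b \in K -> b != gate K z ->
  dist z b = (dK K z).+1.
Proof.
move=> HK Hb Hbg; have [Hg Hmin] := gateP z Hb; exact: GL HK Hg Hmin Hb Hbg.
Qed.

Lemma sep_gate (K : {set T}) a r r2 : maxclique K -> a \in K -> gate K r != a ->
  gate K r2 = a -> r2 != a -> ~~ connect (induced e [set~ a]) r2 r.
Proof.
move=> HK Ha Hr Hr2 Hr2a; set b := gate K r in Hr.
have [Hb _] := gateP r Ha.
have Hab : e a b by apply: (clique_adj (maxsetp HK)) => //; rewrite eq_sym.
apply: (side_sep Hab) => //.
- have Hbg : b != gate K r2 by rewrite Hr2.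
  by rewrite /side; apply/eqP; have := GLg HK Hb Hbg; rewrite /dK Hr2.
- rewrite /side; apply/negP => /eqP H.
  have Hag : a != gate K r by rewrite eq_sym.
  have := GLg HK Ha Hag; rewrite /dK -/b H; glia.
Qed.

Section Upper.
Variable S : {set T}.
Hypothesis Sgp : gp_set e S.

Definition Phi (K : {set T}) := \sum_(r in S) dK K r.

Lemma sum_ind (P : pred T) : \sum_(r in S) (P r : nat) = #|[set r in S | P r]|.
Proof.
rewrite -sum1_card; symmetry.
rewrite (eq_bigl (fun r => (r \in S) && P r)) => [|r]; last by rewrite !inE.
by rewrite big_mkcondr; apply: eq_bigr => r _; case: (P r).
Qed.

Lemma arith_final (p p' nA nB : nat) : p <= p' -> p' + nB <= p + nA -> nA < nB -> False.
Proof. lia. Qed.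

Lemma arith_AB (nA nB nS nS1 : nat) : nA <= 1 -> nS1 <= nB -> nS = 1 + nS1 -> 2 < nS -> nA < nB.
Proof. lia. Qed.

Lemma SL : 2 < #|S| -> (forall m, m \notin S -> ~~ blocked S m) -> #|S| <= clique_number e.
Proof.
move=> H3 Hnb.
have [x0 Hx0] : exists x0, x0 \in S.
  by apply/set0Pn; rewrite -card_gt0; apply: leq_trans H3.
have Hc0 : is_clique e [set x0].
  by apply: cliqueP => x y; rewrite !inE => /eqP-> /eqP->; rewrite eqxx.
case: (maxset_exists Hc0) => K0 HK0 _.
case: (arg_minnP Phi HK0) => K HK Hmin.
have HKc := maxsetp HK.
have [k0 Hk0] : exists k0, k0 \in K.
  apply/set0Pn; apply/eqP => EK.
  have := maxsetsup HK Hc0; rewrite EK sub0set => /(_ isT) /setP /(_ x0).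
  by rewrite !inE eqxx.
apply: (leq_trans _ (leq_bigmax_cond K HKc)).
rewrite leqNgt; apply/negP => Hlt.
have [x [y [Hx Hy Hxy Hg]]] : exists x y, [/\ x \in S, y \in S, x != y & gate K x = gate K y].
  case: (boolP [exists x in S, exists y in S, (x != y) && (gate K x == gate K y)]).
    move=> /exists_inP[x Hx /exists_inP[y Hy /andP[H1 /eqP H2]]]; by exists x, y.
  move=> /negP Hn; exfalso.
  have Hinj : {in S &, injective (gate K)}.
    move=> u v Hu Hv Huv; apply/eqP/negPn/negP => Hne; apply: Hn.
    apply/exists_inP; exists u => //; apply/exists_inP; exists v => //.
    by rewrite Hne Huv eqxx.
  have Hsub : [set gate K x | x in S] \subset K.
    by apply/subsetP => z /imsetP[u _ ->]; case: (gateP u Hk0).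
  move: (subset_leq_card Hsub); rewrite (card_in_imset Hinj) => Hle.
  by move: Hlt; rewrite ltnNge Hle.
set a := gate K x.
have [x1 [y1 [[Hx1 Hy1 Hxy1 Hgx1] [Hgy1 Hx1a]]]] : exists x1 y1, [/\ x1 \in S, y1 \in S,
    x1 != y1 & gate K x1 = a] /\ (gate K y1 = a /\ x1 != a).
  case: (eqVneq x a) => [Exa|Hxa].
  - have H1 : y != x by rewrite eq_sym.
    have H2 : gate K y = a by rewrite /a Hg.
    have H4 : y != a by apply/eqP => E; move: Hxy; rewrite Exa -E eqxx.
    by exists y, x; split; split.
  - by exists x, y; split; split.
have [Ha _] := gateP x Hk0; rewrite -/a in Ha.
have Hax1 : a != x1 by rewrite eq_sym.
case: (step Hax1) => a' [Haa' Da'].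
have Ha'K : a' \notin K.
  apply/negP => Ha'; have [_ Hm] := gateP x1 Hk0; have := Hm a' Ha'.
  by rewrite Hgx1 (dist_sym x1 a) (dist_sym x1 a') Da' ltnn.
have Hc2 : is_clique e [set a; a'].
  apply: cliqueP => u v; rewrite !inE => /orP[/eqP->|/eqP->] /orP[/eqP->|/eqP->];
    rewrite ?eqxx // => _; by rewrite // esym.
case: (maxset_exists Hc2) => K' HK' Hsub'.
have HaK' : a \in K' by apply: (subsetP Hsub'); rewrite !inE eqxx.
have Ha'K' : a' \in K' by apply: (subsetP Hsub'); rewrite !inE eqxx orbT.
have HPhi : Phi K <= Phi K' := Hmin K' HK'.
set A := [set r in S | gate K r != a].
set B := [set r in S | (gate K r == a) && (gate K' r != a)].
have Hineq : Phi K' + #|B| <= Phi K + #|A|.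
  rewrite /A /B -!sum_ind /Phi -!big_split /=; apply: leq_sum => r Hr.
  case: (eqVneq (gate K r) a) => [Er|Ner] /=.
  - case: (eqVneq (gate K' r) a) => [Er'|Ner'] /=.
    + by rewrite /dK Er Er' !addn0.
    + have Hag : a != gate K' r by rewrite eq_sym.
      by have := GLg HK' HaK' Hag; rewrite /dK Er => ->; rewrite addn1 addn0.
  - have Hag : a != gate K r by rewrite eq_sym.
    have G := GLg HK Ha Hag; have [_ Hm'] := gateP r HaK'; have := Hm' a HaK'.
    by rewrite G /dK addn0 addn1.
have HxB : x1 \in B.
  rewrite inE Hx1 Hgx1 eqxx /=; apply/eqP => E'.
  have [_ Hm'] := gateP x1 HaK'; have := Hm' a' Ha'K'.
  by rewrite E' (dist_sym x1 a) (dist_sym x1 a') Da' ltnn.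
have HxB' : gate K' x1 != a by move: HxB; rewrite inE => /andP[_ /andP[_ ->]].
have [r0 [Hr0 Hr0a Hcon]] : exists r0, [/\ r0 \in S, a \in S -> r0 = a &
    forall u v, u \in S -> v \in S -> u != r0 -> v != r0 -> u != a -> v != a ->
      connect (induced e [set~ a]) u v].
  case: (boolP (a \in S)) => HaS.
  - exists a; split => // u v Hu Hv _ _ Hua Hva; apply/negPn/negP => Hn.
    have Huv : u != v by apply/eqP => E'; move: Hn; rewrite E' connect0.
    by apply: (Sgp Hu HaS Hv Hua _ Huv (sep_oncommon Hua Hva Hn)); rewrite eq_sym.
  - move: (Hnb a HaS) => /forall_inPn[r0 Hr0 /exists_inPn Hn].
    exists r0; split; first exact: Hr0.
      by [].
    move=> u v Hu Hv Hur Hvr _ _; move: (Hn u Hu) => /exists_inPn/(_ v Hv).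
    by rewrite Hur Hvr /= negbK.
have Hsym := sym_connect_sym (induced_sym [set~ a]).
have HAB : #|A| < #|B|.
  case: (boolP (x1 == r0)) => [/eqP Ex1|Hx1r0].
  - have HaS : a \notin S.
      by apply/negP => HaS; move: Hx1a; rewrite Ex1 (Hr0a HaS) eqxx.
    have Hy1r0 : y1 != r0 by rewrite -Ex1 eq_sym.
    have Hy1a : y1 != a by apply/eqP => E'; move: HaS; rewrite -E' Hy1.
    have A0 : A = set0.
      apply/setP => u; rewrite !inE; apply/negP => /andP[Hu Hua].
      have Hur0 : u != r0 by apply/eqP => E'; move: Hua; rewrite E' -Ex1 Hgx1 eqxx.
      have Hua' : u != a by apply/eqP => E'; move: HaS; rewrite -E' Hu.
      have := Hcon y1 u Hy1 Hu Hy1r0 Hur0 Hy1a Hua'.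
      by rewrite (negbTE (sep_gate HK Ha Hua Hgy1 Hy1a)).
    by rewrite A0 cards0 card_gt0; apply/set0Pn; exists x1.
  - have HB : forall u, u \in S -> u != r0 -> u \in B.
      move=> u Hu Hur0.
      have Hua : u != a.
        apply/eqP => E'; have HaS : a \in S by rewrite -E'.
        by move: Hur0; rewrite (Hr0a HaS) E' eqxx.
      have Hc := Hcon x1 u Hx1 Hu Hx1r0 Hur0 Hx1a Hua.
      rewrite inE Hu /=; case: (eqVneq (gate K u) a) => [Eu|Nu] /=.
      + apply/negP => /eqP Eu'.
        have := sep_gate HK' HaK' HxB' Eu' Hua; by rewrite Hsym Hc.
      + by have := sep_gate HK Ha Nu Hgx1 Hx1a; rewrite Hc.
    have HA : A \subset [set r0].
      apply/subsetP => u; rewrite !inE => /andP[Hu Hua]; apply/negPn/negP => Hur0.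
      by have := HB u Hu Hur0; rewrite inE Hu (negbTE Hua).
    have HSB : S :\ r0 \subset B.
      by apply/subsetP => u /setD1P[Hur0 Hu]; exact: HB u Hu Hur0.
    have L1 := subset_leq_card HA; have L2 := subset_leq_card HSB.
    rewrite cards1 in L1; have L3 := cardsD1 r0 S; rewrite Hr0 in L3.
    exact: (arith_AB L1 L2 L3 H3).
exact: (arith_final HPhi Hineq HAB).
Qed.

End Upper.

Lemma omega_ge1 (x : T) : 1 <= clique_number e.
Proof.
have Hc : is_clique e [set x].
  by apply: cliqueP => u v; rewrite !inE => /eqP-> /eqP->; rewrite eqxx.
by apply: leq_trans (leq_bigmax_cond [set x] Hc); rewrite cards1.
Qed.

Lemma omega_ge2 (x y : T) : x != y -> 2 <= clique_number e.
Proof.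
move=> Hxy; have /connectP[p Hp Hl] := econn x y.
case: p Hp Hl => [|z p] /=; first by move=> _ E; rewrite E eqxx in Hxy.
move=> /andP[Hxz _] _.
have Hc : is_clique e [set x; z].
  apply: cliqueP => u v; rewrite !inE => /orP[/eqP->|/eqP->] /orP[/eqP->|/eqP->];
    rewrite ?eqxx // => _; by rewrite // esym.
by apply: leq_trans (leq_bigmax_cond _ Hc); rewrite cards2 edge_neq.
Qed.

Lemma mob_bound (S : {set T}) : mobile_gp_set e S -> #|S| <= clique_number e.
Proof.
case=> Sgp [l [Hl Hcov]].
case: (leqP #|S| 2) => HS.
  case: (leqP #|S| 1) => HS1.
    case: (boolP (S == set0)) => [/eqP->|/set0Pn[x Hx]]; first by rewrite cards0.
    exact: leq_trans HS1 (omega_ge1 x).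
  have [x Hx] : exists x, x \in S.
    by apply/set0Pn; rewrite -card_gt0; apply: leq_trans HS1.
  have : 0 < #|S :\ x| by move: HS1; rewrite (cardsD1 x S) Hx.
  rewrite card_gt0 => /set0Pn[y /setD1P[Hyx Hy]].
  by apply: leq_trans HS (omega_ge2 (x:=x) (y:=y) _); rewrite eq_sym.
apply: (@SL S Sgp HS) => m HmS; apply/negP => Hb.
case: (Hcov m) => C HC HmC.
by have := blocked_seq HmS Hb Hl HC; rewrite HmC.
Qed.

Lemma lower : clique_number e <= mob e.
Proof.
have Hc0 : is_clique e set0 by apply: cliqueP => u v; rewrite inE.
case: (arg_maxnP (fun K : {set T} => #|K|) Hc0) => K HK Hmax.
have Hom : clique_number e <= #|K| by apply/bigmax_leqP => K' HK'; exact: Hmax.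
apply: leq_trans Hom _.
case: (boolP (K == set0)) => [/eqP->|HK0]; first by rewrite cards0.
have HKm : maxclique K.
  apply/maxsetP; split => // B HB HKB; apply/eqP; rewrite eq_sym eqEcard HKB /=.
  exact: Hmax.
apply: (leq_bigmax_cond K); apply/boolp.asboolP; exact: clique_mobile.
Qed.

End Main.

Theorem theorem2p2 (T : finType) (e : rel T) :
  block_graph e -> mob e = clique_number e.
Proof.
case=> [[esym eirr] [econn hblock]].
apply/eqP; rewrite eqn_leq; apply/andP; split.
- apply/bigmax_leqP => S /boolp.asboolP HS.
  exact: (mob_bound esym eirr econn hblock HS).
- exact: (lower esym eirr econn hblock).
Qed.
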